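(* Assume all features are binary, $x_{i,k}\in\{0,1\}$. Let $0<\lambda\le\lambda_0$. Let $\boldsymbol\alpha_0^\star$ be the optimal solution of $\max_{\boldsymbol\alpha\ge\mathbf0}D_{\lambda_0}(\boldsymbol\alpha)$, and let $\boldsymbol\alpha_0\in\mathbb R^{2nK}_{\ge0}$ and $\epsilon\ge0$ satisfy $\|\boldsymbol\alpha_0-\boldsymbol\alpha_0^\star\|_2\le\epsilon$. Let $\mathbf m^\star$ be the optimal solution of $\min_{\mathbf m\ge\mathbf0}P_\lambda(\mathbf m)$. For $k\in[p]$ let $$a=\sum_{i\in[n]}\max\Big\{\sum_{l\in\mathcal D_i}(\alpha_0)_{il}x_{l,k},\;x_{i,k}\Big[\sum_{l\in\mathcal D_i}(\alpha_0)_{il}-\sum_{j\in\mathcal S_i}(\alpha_0)_{ij}(1-x_{j,k})\Big]\Big\},$$ $$b=\sqrt{\sum_{i\in[n]}\Big[\sum_{l\in\mathcal D_i}\max\{x_{i,k},x_{l,k}\}+\sum_{j\in\mathcal S_i}\max\{x_{i,k},x_{j,k}\}\Big]},\qquad\lambda'_a=\frac{\lambda_0(2\epsilon b+\|\boldsymbol\alpha_0\|_2b+a)}{2\lambda_0+\|\boldsymbol\alpha_0\|_2b-a}.$$ If $\lambda'_a\le\lambda\le\lambda_0$, then $m^\star_{k'}=0$ for every descendant $k'\supseteq k$.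
   Context: Let $n,K,p\ge1$ be integers, $[n]=\{1,\dots,n\}$. For each $i\in[n]$ let $\mathbf x_i=(x_{i,1},\dots,x_{i,p})^\top\in\mathbb R^p$ and let $\mathcal D_i,\mathcal S_i\subseteq[n]$ be sets of size $K$. Put $\mathbf c_{ij}=(\mathbf x_i-\mathbf x_j)\circ(\mathbf x_i-\mathbf x_j)$ (entrywise product). Vectors in $\mathbb R^{2nK}$ are indexed by the pairs $(i,l)$, $l\in\mathcal D_i$ (''different-class pairs'') and $(i,j)$, $j\in\mathcal S_i$ (''same-class pairs''); $\boldsymbol\alpha_0$ has entries $(\alpha_0)_{il},(\alpha_0)_{ij}$. $\mathbf C\in\mathbb R^{p\times2nK}$ has column $\mathbf c_{il}$ for each different-class pair and $-\mathbf c_{ij}$ for each same-class pair. Fix $L\ge U\ge0$, $\eta>0$; let $\mathbf t\in\mathbb R^{2nK}$ have entry $L$ at different-class pairs and $-U$ at same-class pairs; $\ell_s(x)=([s-x]_+)^2$ with $[z]_+=\max\{z,0\}$ (entrywise for vectors); $\mathbf1$ is the all-ones vector. For $\lambda>0$, $$P_\lambda(\mathbf m)=\sum_{i\in[n]}\Big[\sum_{l\in\mathcal D_i}\ell_L(\mathbf m^\top\mathbf c_{il})+\sum_{j\in\mathcal S_i}\ell_{-U}(-\mathbf m^\top\mathbf c_{ij})\Big]+\lambda\Big(\mathbf m^\top\mathbf1+\frac\eta2\|\mathbf m\|_2^2\Big)\ (\mathbf m\in\mathbb R^p_{\ge0}),$$ $$D_\lambda(\boldsymbol\alpha)=-\frac14\|\boldsymbol\alpha\|_2^2+\mathbf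 t^\top\boldsymbol\alpha-\frac{\lambda\eta}2\Big\|\frac1{\lambda\eta}[\mathbf C\boldsymbol\alpha-\lambda\mathbf1]_+\Big\|_2^2\ (\boldsymbol\alpha\in\mathbb R^{2nK}_{\ge0}).$$ The feature indices $[p]$ are nodes of a rooted graph-mining tree: $x_{i,k}=g(\#(H_k\sqsubseteq G_i))$ with $g(x)=1_{x>0}$, where $H_k$ is the subgraph at node $k$, $G_i$ the $i$-th input graph, $\#(H\sqsubseteq G)$ the number of non-overlapping occurrences of $H$ in $G$, and each node's subgraph is contained in its children's subgraphs. Write $k'\supseteq k$ if $k'$ is a descendant of $k$; then $x_{i,k'}\le x_{i,k}$ for all $i$ whenever $k'\supseteq k$. *)

(* Defs.v *)
From mathcomp Require Import all_boot all_order all_algebra.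
From mathcomp Require Import reals.
Set Implicit Arguments. Unset Strict Implicit. Unset Printing Implicit Defensive.
Import Order.TTheory GRing.Theory Num.Theory.
Local Open Scope ring_scope.

Section Defs.
Variables (R : realType) (n p : nat).
Variable x : 'I_n -> 'I_p -> R.
Variables (D S : 'I_n -> {set 'I_n}).

Definition cvec (i j : 'I_n) (k : 'I_p) : R := (x i k - x j k) ^+ 2.

Definition mdotc (m : 'I_p -> R) (i j : 'I_n) : R := \sum_(k < p) m k * cvec i j k.

Definition sqhinge (s y : R) : R := (Num.max (s - y) 0) ^+ 2.

Definition Pobj (L U eta lam : R) (m : 'I_p -> R) : R :=
  \sum_(i < n) (\sum_(l in D i) sqhinge L (mdotc m i l)
               + \sum_(j in S i) sqhinge (- U) (- mdotc m i j))
  + lam * (\sum_(k < p) m k + eta / 2 * \sum_(k < p) m k ^+ 2).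

(* A dual vector alpha in R^{2nK}, indexed by the pairs (i,l), l in D i
   (component aD i l) and (i,j), j in S i (component aS i j); values of
   aD/aS outside these pairs are irrelevant. *)
Record dvec := DVec { aD : 'I_n -> 'I_n -> R; aS : 'I_n -> 'I_n -> R }.

Definition dnonneg (al : dvec) : Prop :=
  (forall i l, l \in D i -> 0 <= aD al i l) /\
  (forall i j, j \in S i -> 0 <= aS al i j).

Definition dnorm2 (al : dvec) : R :=
  \sum_(i < n) (\sum_(l in D i) aD al i l ^+ 2 + \sum_(j in S i) aS al i j ^+ 2).

Definition dnorm (al : dvec) : R := Num.sqrt (dnorm2 al).

Definition dsub (a1 a2 : dvec) : dvec :=
  DVec (fun i l => aD a1 i l - aD a2 i l) (fun i j => aS a1 i j - aS a2 i j).

Definition tdot (L U : R) (al : dvec) : R :=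
  \sum_(i < n) (\sum_(l in D i) L * aD al i l + \sum_(j in S i) (- U) * aS al i j).

Definition Cmul (al : dvec) (k : 'I_p) : R :=
  \sum_(i < n) (\sum_(l in D i) aD al i l * cvec i l k
               - \sum_(j in S i) aS al i j * cvec i j k).

Definition Dobj (L U eta lam : R) (al : dvec) : R :=
  - (1 / 4) * dnorm2 al + tdot L U al
  - lam * eta / 2 *
    \sum_(k < p) ((Num.max (Cmul al k - lam) 0) / (lam * eta)) ^+ 2.

Definition rule_a (al : dvec) (k : 'I_p) : R :=
  \sum_(i < n) Num.max (\sum_(l in D i) aD al i l * x l k)
     (x i k * (\sum_(l in D i) aD al i l
               - \sum_(j in S i) aS al i j * (1 - x j k))).

Definition rule_b (k : 'I_p) : R :=
  Num.sqrt (\sum_(i < n) (\sum_(l in D i) Num.max (x i k) (x l k)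
                          + \sum_(j in S i) Num.max (x i k) (x j k))).

Definition lambda_a (lam0 eps : R) (al : dvec) (k : 'I_p) : R :=
  lam0 * (2 * eps * rule_b k + dnorm al * rule_b k + rule_a al k)
  / (2 * lam0 + dnorm al * rule_b k - rule_a al k).

End Defs.

(* Rooted tree on the feature indices given by a parent map; the root is
   a fixed point of [parent]. k' is a descendant of k (k' ⊇ k, including
   k' = k) iff k is reached from k' by following parent links. *)
Definition descendant (p : nat) (parent : 'I_p -> 'I_p) (k' k : 'I_p) : Prop :=
  exists t : nat, iter t parent k' = k.

Definition rooted_tree (p : nat) (parent : 'I_p -> 'I_p) (root : 'I_p) : Prop :=
  parent root = root /\ forall k, exists t : nat, iter t parent k = root.

(* Main.v *)
Require Import Defs.
From mathcomp Require Import all_boot all_order all_algebra.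
From mathcomp Require Import reals.
From mathcomp Require Import ring lra.
Set Implicit Arguments. Unset Strict Implicit. Unset Printing Implicit Defensive.
Import Order.TTheory GRing.Theory Num.Theory.
Local Open Scope ring_scope.

Section Aux.
Variables (R : realType) (n p : nat).
Variable x : 'I_n -> 'I_p -> R.
Variables (D S : 'I_n -> {set 'I_n}).

Definition psum (FD FS : 'I_n -> 'I_n -> R) : R :=
  \sum_(i < n) (\sum_(l in D i) FD i l + \sum_(j in S i) FS i j).

Lemma psum_add FD FS GD GS :
  psum (fun i l => FD i l + GD i l) (fun i j => FS i j + GS i j) = psum FD FS + psum GD GS.
Proof.
rewrite /psum -big_split /=; apply: eq_bigr => i _.
by rewrite !big_split /= addrACA.
Qed.

Lemma psum_scale c FD FS :
  psum (fun i l => c * FD i l) (fun i j => c * FS i j) = c * psum FD FS.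
Proof.
rewrite /psum mulr_sumr; apply: eq_bigr => i _.
by rewrite mulrDr !mulr_sumr.
Qed.

Lemma psum_ext FD FS GD GS :
  (forall i l, l \in D i -> FD i l = GD i l) ->
  (forall i j, j \in S i -> FS i j = GS i j) ->
  psum FD FS = psum GD GS.
Proof.
move=> h1 h2; apply: eq_bigr => i _; congr (_ + _); apply: eq_bigr => j hj; auto.
Qed.

Lemma psum_le FD FS GD GS :
  (forall i l, l \in D i -> FD i l <= GD i l) ->
  (forall i j, j \in S i -> FS i j <= GS i j) ->
  psum FD FS <= psum GD GS.
Proof.
move=> h1 h2; apply: ler_sum => i _; apply: lerD; apply: ler_sum => j hj; auto.
Qed.

Lemma psum_ge0 FD FS :
  (forall i l, l \in D i -> 0 <= FD i l) ->
  (forall i j, j \in S i -> 0 <= FS i j) ->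
  0 <= psum FD FS.
Proof.
move=> h1 h2; apply: sumr_ge0 => i _; apply: addr_ge0; apply: sumr_ge0 => j hj; auto.
Qed.

Lemma psum_exchange (F G : 'I_p -> 'I_n -> 'I_n -> R) :
  \sum_(k < p) psum (F k) (G k) =
  psum (fun i l => \sum_(k < p) F k i l) (fun i j => \sum_(k < p) G k i j).
Proof.
rewrite /psum exchange_big /=; apply: eq_bigr => i _.
by rewrite big_split /= exchange_big /= [X in _ + X]exchange_big.
Qed.

Definition dinner (u w : dvec R n) : R :=
  psum (fun i l => aD u i l * aD w i l) (fun i j => aS u i j * aS w i j).

Definition dlin (a b : R) (u w : dvec R n) : dvec R n :=
  DVec (fun i l => a * aD u i l + b * aD w i l) (fun i j => a * aS u i j + b * aS w i j).

Lemma dinnerC u w : dinner u w = dinner w u.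
Proof. by apply: psum_ext => *; rewrite mulrC. Qed.

Lemma dinner_linl a b u w z : dinner (dlin a b u w) z = a * dinner u z + b * dinner w z.
Proof.
rewrite /dinner -!psum_scale -psum_add; apply: psum_ext => * /=; ring.
Qed.

Lemma dinner_linr a b u w z : dinner z (dlin a b u w) = a * dinner z u + b * dinner z w.
Proof. by rewrite dinnerC dinner_linl !(dinnerC z). Qed.

Lemma dinner_ext u u' w :
  (forall i l, l \in D i -> aD u i l = aD u' i l) ->
  (forall i j, j \in S i -> aS u i j = aS u' i j) ->
  dinner u w = dinner u' w.
Proof. by move=> h1 h2; apply: psum_ext => i l h; rewrite ?h1 ?h2. Qed.

Lemma dnorm_lin a b u w :
  dinner (dlin a b u w) (dlin a b u w) =
  a ^+ 2 * dinner u u + 2 * a * b * dinner u w + b ^+ 2 * dinner w w.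
Proof. rewrite dinner_linl !dinner_linr (dinnerC w u); ring. Qed.

Lemma dinner_ge0 u : 0 <= dinner u u.
Proof. by apply: psum_ge0 => *; rewrite -expr2 sqr_ge0. Qed.

Lemma dnorm2E u : dnorm2 D S u = dinner u u.
Proof. by apply: psum_ext => *; rewrite expr2. Qed.

Lemma dCS u w : dinner u w <= Num.sqrt (dinner u u) * Num.sqrt (dinner w w).
Proof.
set A := dinner u u; set B := dinner w w; set X := dinner u w.
have hA : 0 <= A by apply: dinner_ge0.
have hB : 0 <= B by apply: dinner_ge0.
have hq t : 0 <= t ^+ 2 * A - 2 * t * X + B.
  have := dinner_ge0 (dlin t (-1) u w); rewrite dnorm_lin -/A -/B -/X.
  by move/le_trans; apply; rewrite le_eqVlt; apply/orP; left; apply/eqP; ring.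
have hX2 : X ^+ 2 <= A * B.
  have [A0|A0] := eqVneq A 0.
    have -> : X = 0.
      apply/eqP; apply/negP => /negP X0.
      have := hq ((B + 1) / (2 * X)); rewrite A0.
      have -> : ((B + 1) / (2 * X)) ^+ 2 * 0 - 2 * ((B + 1) / (2 * X)) * X + B = -1.
        by field; rewrite X0.
      by move=> h; lra.
    by rewrite A0 expr0n /= mul0r.
  have Apos : 0 < A by rewrite lt_def A0 hA.
  have := hq (X / A).
  have -> : (X / A) ^+ 2 * A - 2 * (X / A) * X + B = (A * B - X ^+ 2) / A by field.
  by rewrite pmulr_lge0 ?invr_gt0 // subr_ge0.
rewrite -sqrtrM //; apply: le_trans (ler_norm X) _.
by rewrite -sqrtr_sqr; apply: ler_wsqrtr.
Qed.


Definition cdv (k : 'I_p) : dvec R n :=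
  DVec (fun i l => cvec x i l k) (fun i j => - cvec x i j k).
Definition tdv (L U : R) : dvec R n := DVec (fun _ _ => L) (fun _ _ => - U).

Lemma CmulE al k : Cmul x D S al k = dinner al (cdv k).
Proof.
apply: eq_bigr => i _ /=; congr (_ + _); rewrite -sumrN; apply: eq_bigr => j _.
by rewrite mulrN.
Qed.

Lemma Cmul_lin a b u w k : Cmul x D S (dlin a b u w) k = a * Cmul x D S u k + b * Cmul x D S w k.
Proof. by rewrite !CmulE dinner_linl. Qed.

Lemma tdotE L U al : tdot D S L U al = dinner al (tdv L U).
Proof. by apply: psum_ext => * /=; rewrite mulrC. Qed.

Definition Pen (eta lam : R) (al : dvec R n) : R :=
  lam * eta / 2 * \sum_(k < p) ((Num.max (Cmul x D S al k - lam) 0) / (lam * eta)) ^+ 2.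

Lemma DobjE L U eta lam al :
  Dobj x D S L U eta lam al = - (1/4) * dinner al al + dinner al (tdv L U) - Pen eta lam al.
Proof. by rewrite /Dobj dnorm2E tdotE. Qed.

Lemma Pen_scale eta c mu al : 0 < c -> 0 < mu -> 0 < eta ->
  Pen eta (c * mu) (dlin c 0 al al) = c * Pen eta mu al.
Proof.
move=> hc hmu heta; rewrite /Pen.
suff -> : \sum_(k < p) (Num.max (Cmul x D S (dlin c 0 al al) k - c * mu) 0 / (c * mu * eta)) ^+ 2
  = \sum_(k < p) (Num.max (Cmul x D S al k - mu) 0 / (mu * eta)) ^+ 2 by ring.
apply: eq_bigr => k _.
rewrite Cmul_lin mul0r addr0.
have -> : c * Cmul x D S al k - c * mu = c * (Cmul x D S al k - mu) by ring.
have [h|h] := lerP (Cmul x D S al k - mu) 0.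
  rewrite !max_r //; first by rewrite !mul0r.
  by rewrite pmulr_rle0.
rewrite !max_l ?pmulr_rge0 ?(ltW h) //.
congr (_ ^+ 2); field.
by rewrite !gt_eqF.
Qed.

Lemma sq_conv (th A B M : R) : 0 <= th <= 1 -> 0 <= A -> 0 <= B -> 0 <= M ->
  M <= (1 - th) * A + th * B -> M ^+ 2 <= (1 - th) * A ^+ 2 + th * B ^+ 2.
Proof.
move=> /andP [h0 h1] hA hB hM hle.
have h2 : M ^+ 2 <= ((1 - th) * A + th * B) ^+ 2.
  by rewrite ler_sqr ?nnegrE //; nra.
apply: le_trans h2 _.
rewrite -subr_ge0.
have -> : (1 - th) * A ^+ 2 + th * B ^+ 2 - ((1 - th) * A + th * B) ^+ 2
          = th * (1 - th) * (A - B) ^+ 2 by ring.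
by apply: mulr_ge0; [apply: mulr_ge0; lra| apply: sqr_ge0].
Qed.

Lemma Pen_conv eta mu th u w : 0 < mu -> 0 < eta -> 0 <= th <= 1 ->
  Pen eta mu (dlin (1 - th) th u w) <= (1 - th) * Pen eta mu u + th * Pen eta mu w.
Proof.
move=> hmu heta hth; rewrite /Pen.
have hc : 0 < mu * eta by apply: mulr_gt0.
set SG := \sum_(k < p) _.
set SU := \sum_(k < p) _.
set SW := \sum_(k < p) _.
suff key : SG <= (1 - th) * SU + th * SW.
  have hc2 : 0 <= mu * eta / 2 by apply: divr_ge0; lra.
  have := ler_wpM2l hc2 key.
  move/le_trans; apply; rewrite le_eqVlt; apply/orP; left; apply/eqP; ring.
rewrite /SU /SW /SG !mulr_sumr -big_split /=; apply: ler_sum => k _.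
rewrite Cmul_lin.
set a := Cmul x D S u k; set b := Cmul x D S w k.
case/andP: hth => h0 h1.
set M := Num.max ((1 - th) * a + th * b - mu) 0.
set A := Num.max (a - mu) 0.
set B := Num.max (b - mu) 0.
have hA : 0 <= A by rewrite le_max lexx orbT.
have hB : 0 <= B by rewrite le_max lexx orbT.
have key : M ^+ 2 <= (1 - th) * A ^+ 2 + th * B ^+ 2.
  apply: sq_conv => //; first by apply/andP.
    by rewrite le_max lexx orbT.
  rewrite ge_max; apply/andP; split; last by nra.
  have ha : a - mu <= A by rewrite le_max lexx.
  have hb : b - mu <= B by rewrite le_max lexx.
  nra.
rewrite !expr_div_n.
have hic : 0 <= ((mu * eta) ^+ 2)^-1 by rewrite invr_ge0 exprn_ge0 // ltW.
have := ler_wpM2r hic key.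
move/le_trans; apply; rewrite le_eqVlt; apply/orP; left; apply/eqP; ring.
Qed.

Definition dnonneg' (al : dvec R n) :=
  (forall i l, l \in D i -> 0 <= aD al i l) /\ (forall i j, j \in S i -> 0 <= aS al i j).

Lemma dnonneg_lin a b u w : 0 <= a -> 0 <= b -> dnonneg D S u -> dnonneg D S w ->
  dnonneg D S (dlin a b u w).
Proof.
move=> ha hb [u1 u2] [w1 w2]; split=> i l hl /=;
  apply: addr_ge0; apply: mulr_ge0; auto.
Qed.

Lemma theta_lim (Y Z : R) : (forall th, 0 < th <= 1 -> (1 - th) * Z <= Y) -> 0 <= Z -> Z <= Y.
Proof.
move=> h hZ.
have hY : 0 <= Y by have := h 1; rewrite subrr mul0r; apply; rewrite ltr01 lexx.
rewrite leNgt; apply/negP => hlt.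
have Zpos : 0 < Z by apply: le_lt_trans hY hlt.
have := h ((Z - Y) / (2 * Z)).
have -> : (1 - (Z - Y) / (2 * Z)) * Z = (Z + Y) / 2 by field; rewrite gt_eqF.
have hth : 0 < (Z - Y) / (2 * Z) <= 1.
  apply/andP; split; first by apply: divr_gt0; lra.
  rewrite ler_pdivrMr; lra.
move=> /(_ hth); lra.
Qed.

Lemma dual_strong L U eta lam al0 : 0 < lam -> 0 < eta -> dnonneg D S al0 ->
  (forall al, dnonneg D S al -> Dobj x D S L U eta lam al <= Dobj x D S L U eta lam al0) ->
  forall be, dnonneg D S be ->
  Dobj x D S L U eta lam be + (1/4) * dinner (dlin 1 (-1) be al0) (dlin 1 (-1) be al0)
    <= Dobj x D S L U eta lam al0.
Proof.
move=> hlam heta h0 hopt be hbe.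
set Z := (1/4) * _.
suff : Z <= Dobj x D S L U eta lam al0 - Dobj x D S L U eta lam be by move=> h; lra.
apply: theta_lim; last by apply: mulr_ge0; [lra|apply: dinner_ge0].
move=> th /andP [th0 th1].
have hth : 0 <= th <= 1 by rewrite (ltW th0) th1.
have hg := hopt _ (dnonneg_lin (a:=1 - th) (b:=th) ltac:(lra) (ltW th0) h0 hbe).
have hP := Pen_conv (eta:=eta) (mu:=lam) (th:=th) al0 be hlam heta hth.
rewrite /Z dnorm_lin !DobjE in hg *.
rewrite dnorm_lin dinner_linl in hg.
rewrite (dinnerC be al0) in hg *.
set N0 := dinner al0 al0 in hg *; set Nb := dinner be be in hg *.
set X := dinner al0 be in hg *.
set T0 := dinner al0 _ in hg *; set Tb := dinner be _ in hg *.
set Pg := Pen eta lam _ in hg hP.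
set P0 := Pen eta lam al0 in hg hP *; set Pb := Pen eta lam be in hP *.
have hLB : - (1 / 4) * ((1 - th) ^+ 2 * N0 + 2 * (1 - th) * th * X + th ^+ 2 * Nb)
   + ((1 - th) * T0 + th * Tb) - ((1 - th) * P0 + th * Pb) <= - (1 / 4) * N0 + T0 - P0.
  by lra.
set LB := _ - _ in hLB.
set D0 := - (1 / 4) * N0 + T0 - P0 in hLB *.
have key : th * ((D0 - (- (1 / 4) * Nb + Tb - Pb)) - (1 - th) * (1 / 4 * (1 ^+ 2 * Nb + 2 * 1 * -1 * X + (-1) ^+ 2 * N0)))
  = D0 - LB by rewrite /D0 /LB; ring.
have : 0 <= th * ((D0 - (- (1 / 4) * Nb + Tb - Pb)) - (1 - th) * (1 / 4 * (1 ^+ 2 * Nb + 2 * 1 * -1 * X + (-1) ^+ 2 * N0)))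
  by rewrite key subr_ge0.
rewrite pmulr_rge0 // subr_ge0 //.
Qed.

Definition alpha_of (L U : R) (m : 'I_p -> R) : dvec R n :=
  DVec (fun i l => 2 * Num.max (L - mdotc x m i l) 0)
       (fun i j => 2 * Num.max (- U - - mdotc x m i j) 0).

Lemma alpha_of_nonneg L U m : dnonneg D S (alpha_of L U m).
Proof. by split=> i l _ /=; rewrite mulr_ge0 // le_max lexx orbT. Qed.

Definition resid (u b : R) : R := Num.max u 0 ^+ 2 - b * u + b ^+ 2 / 4.

Definition coordt (eta lam mk v : R) : R :=
  lam * mk + lam * eta / 2 * mk ^+ 2 - v * mk
  + lam * eta / 2 * (Num.max (v - lam) 0 / (lam * eta)) ^+ 2.

Lemma PobjE L U eta lam m : Pobj x D S L U eta lam m =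
  psum (fun i l => sqhinge L (mdotc x m i l)) (fun i j => sqhinge (- U) (- mdotc x m i j))
  + lam * (\sum_(k < p) m k + eta / 2 * \sum_(k < p) m k ^+ 2).
Proof. by []. Qed.

Lemma cross_id m be :
  psum (fun i l => aD be i l * mdotc x m i l) (fun i j => - (aS be i j * mdotc x m i j))
  = \sum_(k < p) Cmul x D S be k * m k.
Proof.
rewrite (eq_bigr (fun k => psum (fun i l => m k * (aD be i l * aD (cdv k) i l))
                              (fun i j => m k * (aS be i j * aS (cdv k) i j)))); last first.
  by move=> k _; rewrite psum_scale CmulE mulrC.
rewrite psum_exchange; apply: psum_ext => i l _ /=.
  by rewrite /mdotc mulr_sumr; apply: eq_bigr => k _; ring.
by rewrite /mdotc mulr_sumr -sumrN; apply: eq_bigr => k _; ring.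
Qed.

Lemma PD_id L U eta lam m be :
  Pobj x D S L U eta lam m - Dobj x D S L U eta lam be =
  psum (fun i l => resid (L - mdotc x m i l) (aD be i l))
       (fun i j => resid (- U - - mdotc x m i j) (aS be i j))
  + \sum_(k < p) coordt eta lam (m k) (Cmul x D S be k).
Proof.
rewrite (psum_ext
  (GD := fun i l => sqhinge L (mdotc x m i l) + ((-1) * (aD be i l * L)
      + (aD be i l * mdotc x m i l + (1/4) * (aD be i l * aD be i l))))
  (GS := fun i j => sqhinge (- U) (- mdotc x m i j) + ((-1) * (aS be i j * - U)
      + (- (aS be i j * mdotc x m i j) + (1/4) * (aS be i j * aS be i j)))));
  last first.
- by move=> i j _; rewrite /resid /sqhinge; ring.
- by move=> i l _; rewrite /resid /sqhinge; ring.
rewrite !psum_add !psum_scale cross_id PobjE DobjE /Pen.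
rewrite -/(dinner be be).
have -> : psum (fun i l => aD be i l * L) (fun i j => aS be i j * - U) = dinner be (tdv L U) by [].
have -> : \sum_(k < p) coordt eta lam (m k) (Cmul x D S be k) =
  lam * \sum_(k < p) m k + lam * eta / 2 * \sum_(k < p) m k ^+ 2
  - \sum_(k < p) Cmul x D S be k * m k
  + lam * eta / 2 * \sum_(k < p) (Num.max (Cmul x D S be k - lam) 0 / (lam * eta)) ^+ 2.
  by rewrite /coordt !big_split /= sumrN !mulr_sumr.
ring.
Qed.


Definition upd (m : 'I_p -> R) (k : 'I_p) (h : R) : 'I_p -> R :=
  fun k' => if k' == k then m k' + h else m k'.

Lemma sum_upd (F G : 'I_p -> R) k : (forall k', k' != k -> F k' = G k') ->
  \sum_(k' < p) F k' = \sum_(k' < p) G k' + (F k - G k).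
Proof.
move=> h; rewrite (bigD1 k) //= [in RHS](bigD1 k) //=.
rewrite (eq_bigr G) => [|k' hk]; last by apply: h.
ring.
Qed.

Lemma mdotc_upd m k h i l : mdotc x (upd m k h) i l = mdotc x m i l + h * cvec x i l k.
Proof.
rewrite /mdotc (sum_upd (G := fun k' => m k' * cvec x i l k') (k:=k)) /upd ?eqxx //.
  by congr (_ + _); ring.
by move=> k' /negbTE ->.
Qed.

Lemma f_quad (u d : R) : Num.max (u + d) 0 ^+ 2 <= Num.max u 0 ^+ 2 + 2 * Num.max u 0 * d + d ^+ 2.
Proof.
case: (lerP 0 u) => hu; case: (lerP 0 (u + d)) => hud; nra.
Qed.

Definition gk (L U eta lam : R) m k := - Cmul x D S (alpha_of L U m) k + lam * (1 + eta * m k).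
Definition ck (eta lam : R) k := psum (fun i l => cvec x i l k ^+ 2) (fun i j => cvec x i j k ^+ 2) + lam * eta / 2.

Lemma ck_ge0 eta lam k : 0 < lam -> 0 < eta -> 0 <= ck eta lam k.
Proof.
move=> h1 h2; apply: addr_ge0; first by apply: psum_ge0 => *; apply: sqr_ge0.
by apply: divr_ge0; [apply: mulr_ge0; apply: ltW|].
Qed.

Lemma le_eqr (a b c : R) : a <= b -> b = c -> a <= c.
Proof. by move=> h <-. Qed.

Lemma Pobj_quad (L U eta lam : R) m k (h : R) :
  Pobj x D S L U eta lam (upd m k h) <=
  Pobj x D S L U eta lam m + h * gk L U eta lam m k + h ^+ 2 * ck eta lam k.
Proof.
rewrite !PobjE.
have hps : psum (fun i l => sqhinge L (mdotc x (upd m k h) i l))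
                (fun i j => sqhinge (- U) (- mdotc x (upd m k h) i j))
  <= psum (fun i l => sqhinge L (mdotc x m i l)) (fun i j => sqhinge (- U) (- mdotc x m i j))
     + (- h) * Cmul x D S (alpha_of L U m) k
     + h ^+ 2 * psum (fun i l => cvec x i l k ^+ 2) (fun i j => cvec x i j k ^+ 2).
  rewrite CmulE -!psum_scale -!psum_add; apply: psum_le => i l _ /=;
    rewrite /sqhinge mdotc_upd.
    have := f_quad (L - mdotc x m i l) (- (h * cvec x i l k)).
    rewrite (_ : L - mdotc x m i l + - (h * cvec x i l k) = L - (mdotc x m i l + h * cvec x i l k)); last by ring.
    move/le_trans; apply; rewrite le_eqVlt; apply/orP; left; apply/eqP; ring.
  have := f_quad (- U - - mdotc x m i l) (h * cvec x i l k).
  rewrite (_ : - U - - mdotc x m i l + h * cvec x i l k = - U - - (mdotc x m i l + h * cvec x i l k)); last by ring.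
  move/le_trans; apply; rewrite le_eqVlt; apply/orP; left; apply/eqP; ring.
have e1 : \sum_(k' < p) upd m k h k' = \sum_(k' < p) m k' + h.
  rewrite (sum_upd (G := m) (k:=k)) /upd ?eqxx; first by congr (_ + _); ring.
  by move=> k' /negbTE ->.
have e2 : \sum_(k' < p) upd m k h k' ^+ 2 = \sum_(k' < p) m k' ^+ 2 + (2 * h * m k + h ^+ 2).
  rewrite (sum_upd (G := fun k' => m k' ^+ 2) (k:=k)) /upd ?eqxx; first by congr (_ + _); ring.
  by move=> k' /negbTE ->.
rewrite e1 e2 /gk /ck.
apply: le_eqr; first by apply: lerD; first exact: hps.
by field.
Qed.

Lemma step_pos (g c M : R) : 0 < M -> 0 <= c ->
  (forall h, 0 < h <= M -> 0 <= h * g + h ^+ 2 * c) -> 0 <= g.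
Proof.
move=> hM hc hh; rewrite leNgt; apply/negP => hg.
set h := Num.min M (- g / (c + 1)).
have hc1 : 0 < c + 1 by lra.
have h0 : 0 < h by rewrite lt_min hM /= divr_gt0 // oppr_gt0.
have h1 : h <= M by rewrite ge_min lexx.
have h2 : h * (c + 1) <= - g.
  by rewrite -ler_pdivlMr // ge_min lexx orbT.
have := hh h; rewrite h0 h1 => /(_ isT) H.
nra.
Qed.

Lemma kkt (L U eta lam : R) m : 0 < lam -> 0 < eta -> (forall k, 0 <= m k) ->
  (forall m', (forall k, 0 <= m' k) -> Pobj x D S L U eta lam m <= Pobj x D S L U eta lam m') ->
  forall k, 0 <= gk L U eta lam m k /\ (0 < m k -> gk L U eta lam m k = 0).
Proof.
move=> hlam heta hm hopt k.
have hc := ck_ge0 k hlam heta.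
have hq h : 0 <= m k + h -> 0 <= h * gk L U eta lam m k + h ^+ 2 * ck eta lam k.
  move=> hh.
  have hu : forall k', 0 <= upd m k h k' by move=> k'; rewrite /upd; case: eqP => [->|].
  have := le_trans (hopt _ hu) (Pobj_quad L U eta lam m k h).
  lra.
have g0 : 0 <= gk L U eta lam m k.
  apply: (step_pos (c := ck eta lam k) (M := 1)) => // h /andP [h0 h1]; apply: hq.
  by apply: addr_ge0 => //; apply: ltW.
split=> // mk0.
apply/eqP; rewrite eq_le g0 andbT -oppr_ge0.
apply: (step_pos (c := ck eta lam k) (M := m k)) => // h /andP [h0 h1].
have H := hq (- h) ltac:(lra).
rewrite sqrrN in H; nra.
Qed.

Lemma resid_ge (u b : R) : 0 <= b ->
  1/4 * ((1 * b + (-1) * (2 * Num.max u 0)) * (1 * b + (-1) * (2 * Num.max u 0))) <= resid u b.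
Proof.
move=> hb; rewrite /resid.
have hM : u <= Num.max u 0 by rewrite le_max lexx.
nra.
Qed.

Lemma resid_zero (u : R) : resid u (2 * Num.max u 0) = 0.
Proof.
by rewrite /resid; case: (lerP 0 u) => hu; field.
Qed.

Lemma coordt_ge0 (eta lam mk v : R) : 0 < lam -> 0 < eta -> 0 <= mk -> 0 <= coordt eta lam mk v.
Proof.
move=> hl he hm; rewrite /coordt.
have hc : 0 < lam * eta by apply: mulr_gt0.
case: (lerP (v - lam) 0) => hv.
  rewrite mul0r expr0n /= mulr0 addr0.
  have : 0 <= lam * eta / 2 * mk ^+ 2 by apply: mulr_ge0; [apply: divr_ge0; lra| apply: sqr_ge0].
  nra.
set q := (v - lam) / (lam * eta).
have hv' : v - lam = lam * eta * q by rewrite /q; field; rewrite !gt_eqF.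
have -> : lam * mk + lam * eta / 2 * mk ^+ 2 - v * mk + lam * eta / 2 * q ^+ 2
          = lam * eta / 2 * (mk - q) ^+ 2.
  have ev : v = lam + lam * eta * q by lra.
  by rewrite [in v * mk]ev; field.
by apply: mulr_ge0; [apply: divr_ge0; lra| apply: sqr_ge0].
Qed.

Lemma coordt_zero (eta lam mk v : R) : 0 < lam -> 0 < eta -> 0 <= mk ->
  0 <= - v + lam * (1 + eta * mk) -> (0 < mk -> - v + lam * (1 + eta * mk) = 0) ->
  coordt eta lam mk v = 0.
Proof.
move=> hl he hm hg hz; rewrite /coordt.
have hc : 0 < lam * eta by apply: mulr_gt0.
case: (ltrP 0 mk) => hmk.
  have hv : v = lam + lam * eta * mk by have := hz hmk; lra.
  have hp : 0 < lam * eta * mk by apply: mulr_gt0.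
  rewrite max_l; last by rewrite hv; lra.
  by rewrite hv; field; rewrite !gt_eqF.
have -> : mk = 0 by apply/eqP; rewrite eq_le hmk hm.
rewrite max_r; first by rewrite mul0r expr0n /=; ring.
nra.
Qed.

Lemma wdual (L U eta lam : R) m be : 0 < lam -> 0 < eta -> (forall k, 0 <= m k) -> dnonneg D S be ->
  Dobj x D S L U eta lam be
  + 1/4 * dinner (dlin 1 (-1) be (alpha_of L U m)) (dlin 1 (-1) be (alpha_of L U m))
  <= Pobj x D S L U eta lam m.
Proof.
move=> hl he hm [b1 b2].
have := PD_id L U eta lam m be.
have h1 : 1/4 * dinner (dlin 1 (-1) be (alpha_of L U m)) (dlin 1 (-1) be (alpha_of L U m))
   <= psum (fun i l => resid (L - mdotc x m i l) (aD be i l))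
       (fun i j => resid (- U - - mdotc x m i j) (aS be i j)).
  rewrite /dinner -psum_scale; apply: psum_le => i l hl' /=; apply: resid_ge; auto.
have h2 : 0 <= \sum_(k < p) coordt eta lam (m k) (Cmul x D S be k).
  by apply: sumr_ge0 => k _; apply: coordt_ge0.
lra.
Qed.

Lemma sdual (L U eta lam : R) m : 0 < lam -> 0 < eta -> (forall k, 0 <= m k) ->
  (forall m', (forall k, 0 <= m' k) -> Pobj x D S L U eta lam m <= Pobj x D S L U eta lam m') ->
  Pobj x D S L U eta lam m <= Dobj x D S L U eta lam (alpha_of L U m).
Proof.
move=> hl he hm hopt.
have E := PD_id L U eta lam m (alpha_of L U m).
have E1 : psum (fun i l => resid (L - mdotc x m i l) (aD (alpha_of L U m) i l))
       (fun i j => resid (- U - - mdotc x m i j) (aS (alpha_of L U m) i j)) = 0.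
  rewrite (psum_ext (GD := fun _ _ => 0) (GS := fun _ _ => 0)).
  - by rewrite /psum big1 // => i _; rewrite !big1 ?addr0.
  - by move=> i l _ /=; apply: resid_zero.
  - by move=> i l _ /=; apply: resid_zero.
have E2 : \sum_(k < p) coordt eta lam (m k) (Cmul x D S (alpha_of L U m) k) = 0.
  apply: big1 => k _; have [g1 g2] := kkt hl he hm hopt k.
  by apply: coordt_zero.
rewrite E1 E2 in E; lra.
Qed.


Lemma desc_le (parent : 'I_p -> 'I_p) : (forall i k1, x i k1 <= x i (parent k1)) ->
  forall t k1 i, x i k1 <= x i (iter t parent k1).
Proof.
move=> hp; elim=> [|t IH] k1 i //=.
exact: le_trans (IH k1 i) (hp _ _).
Qed.

Section Bin.
Hypothesis hb : forall i k1, x i k1 = 0 \/ x i k1 = 1.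

Lemma bin_ge0 i k1 : 0 <= x i k1. Proof. by case: (hb i k1) => ->; rewrite ?ler01. Qed.
Lemma bin_le1 i k1 : x i k1 <= 1. Proof. by case: (hb i k1) => ->; rewrite ?ler01. Qed.

Lemma sq0 (y : R) : y = 0 \/ y = 1 -> (0 - y) ^+ 2 = y.
Proof. by case=> ->; ring. Qed.
Lemma sq1 (y : R) : y = 0 \/ y = 1 -> (1 - y) ^+ 2 = 1 - y.
Proof. by case=> ->; ring. Qed.

Variables (k k' : 'I_p).
Hypothesis hle : forall i, x i k' <= x i k.

Lemma cvec_sq_le i l : cvec x i l k' * cvec x i l k' <= Num.max (x i k) (x l k).
Proof.
have h1 : cvec x i l k' * cvec x i l k' <= Num.max (x i k') (x l k').
  rewrite /cvec; case: (hb i k') => ->; case: (hb l k') => ->;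
    rewrite le_max; apply/orP; [left|right|left|left]; rewrite !expr2; lra.
apply: le_trans h1 _.
by rewrite ge_max !le_max !hle orbT.
Qed.

Definition bsum := psum (fun i l => Num.max (x i k) (x l k)) (fun i j => Num.max (x i k) (x j k)).

Lemma Ncdv_le : dinner (cdv k') (cdv k') <= bsum.
Proof.
apply: psum_le => i l _ /=; last rewrite mulrNN; exact: cvec_sq_le.
Qed.

Lemma rule_bE : rule_b x D S k = Num.sqrt bsum. Proof. by []. Qed.

Lemma Cmul_le_a al : dnonneg D S al -> Cmul x D S al k' <= rule_a x D S al k.
Proof.
move=> [h1 h2]; apply: ler_sum => i _.
case: (hb i k') => hik'.
  have e : \sum_(l in D i) aD al i l * cvec x i l k' = \sum_(l in D i) aD al i l * x l k'.
    by apply: eq_bigr => l _; rewrite /cvec hik' sq0.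
  rewrite e le_max; apply/orP; left.
  have hs : 0 <= \sum_(j in S i) aS al i j * cvec x i j k'.
    by apply: sumr_ge0 => j hj; apply: mulr_ge0; [apply: h2|apply: sqr_ge0].
  apply: le_trans (_ : _ <= \sum_(l in D i) aD al i l * x l k') _; first by lra.
  by apply: ler_sum => l hl; apply: ler_wpM2l; [apply: h1|apply: hle].
have hik : x i k = 1.
  case: (hb i k) => // h0; have := hle i; rewrite hik' h0; lra.
rewrite hik mul1r le_max; apply/orP; right.
apply: lerB.
  apply: ler_sum => l hl; rewrite /cvec hik' sq1 //.
  have := bin_ge0 l k'; have := h1 _ _ hl; nra.
apply: ler_sum => j hj; rewrite /cvec hik' sq1 //.
have := hle j; have := h2 _ _ hj; nra.
Qed.

Lemma a_le_nb al : dnonneg D S al ->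
  rule_a x D S al k <= Num.sqrt (dinner al al) * rule_b x D S k.
Proof.
move=> [h1 h2].
set w := DVec (fun i l => Num.max (x i k) (x l k)) (fun _ _ => (0:R)).
have hmax0 i l : 0 <= Num.max (x i k) (x l k) by rewrite le_max bin_ge0.
have hmax1 i l : Num.max (x i k) (x l k) <= 1 by rewrite ge_max !bin_le1.
have ha : rule_a x D S al k <= dinner al w.
  apply: ler_sum => i _ /=.
  have e0 : \sum_(j in S i) aS al i j * 0 = 0 by rewrite big1 // => j _; rewrite mulr0.
  rewrite e0 addr0 ge_max; apply/andP; split.
    by apply: ler_sum => l hl; apply: ler_wpM2l; [apply: h1|rewrite le_max lexx orbT].
  have hpos : 0 <= \sum_(l in D i) aD al i l * Num.max (x i k) (x l k).
    by apply: sumr_ge0 => l hl; apply: mulr_ge0; [apply: h1|apply: hmax0].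
  case: (hb i k) => e; rewrite [in x i k * _]e; first by rewrite mul0r.
  rewrite mul1r.
  have hs : 0 <= \sum_(j in S i) aS al i j * (1 - x j k).
    by apply: sumr_ge0 => j hj; apply: mulr_ge0; [apply: h2|rewrite subr_ge0 bin_le1].
  apply: le_trans (_ : _ <= \sum_(l in D i) aD al i l) _; first by lra.
  apply: ler_sum => l hl.
  have : 1 <= Num.max (x i k) (x l k).
    by rewrite le_max e lexx.
  have := h1 _ _ hl; nra.
have hw : dinner w w <= bsum.
  apply: psum_le => i l _ /=; last by rewrite mulr0 le_max bin_ge0.
  have := hmax0 i l; have := hmax1 i l; nra.
apply: le_trans ha _; apply: le_trans (dCS al w) _.
apply: ler_wpM2l; first by apply: sqrtr_ge0.
by rewrite rule_bE; apply: ler_wsqrtr.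
Qed.

End Bin.


Lemma main_sec (parent : 'I_p -> 'I_p) (L U eta lam lam0 eps : R)
  (a0s a0 : dvec R n) (mstar : 'I_p -> R) (k : 'I_p) :
  0 < eta ->
  (forall i k1, x i k1 <= x i (parent k1)) ->
  (forall i k1, x i k1 = 0 \/ x i k1 = 1) ->
  (0 < lam) -> (lam <= lam0) ->
  dnonneg D S a0s ->
  (forall al, dnonneg D S al ->
     Dobj x D S L U eta lam0 al <= Dobj x D S L U eta lam0 a0s) ->
  dnonneg D S a0 -> 0 <= eps ->
  dnorm D S (dsub a0 a0s) <= eps ->
  (forall k1, 0 <= mstar k1) ->
  (forall m : 'I_p -> R, (forall k1, 0 <= m k1) ->
     Pobj x D S L U eta lam mstar <= Pobj x D S L U eta lam m) ->
  lambda_a x D S lam0 eps a0 k <= lam ->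
  forall k', descendant parent k' k -> mstar k' = 0.
Proof.
move=> heta hpar hb hlam hll0 ha0s hopt0 ha0 heps hdist hm hoptm hrule k' [t ht].
have hle : forall i, x i k' <= x i k by move=> i; rewrite -ht; apply: desc_le.
have lam0p : 0 < lam0 by apply: lt_le_trans hll0.
have [s [s0 [s1 hls]]] : exists s, 0 < s /\ s <= 1 /\ lam = s * lam0.
  exists (lam / lam0); split; first by apply: divr_gt0.
  split; first by rewrite ler_pdivrMr // mul1r.
  by field; rewrite gt_eqF.
set al := alpha_of L U mstar.
have [g0 gz] := kkt hlam heta hm hoptm k'.
suff hC : Cmul x D S al k' <= lam.
  apply/eqP; rewrite eq_le hm andbT leNgt; apply/negP => mk.
  have := gz mk; rewrite /gk -/al => hg.
  have : 0 < lam * eta * mstar k' by apply: mulr_gt0 => //; apply: mulr_gt0.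
  nra.
have hA := wdual L U hlam heta hm (dnonneg_lin (ltW s0) (lexx 0) ha0s ha0s).
have hSD := sdual hlam heta hm hoptm.
have hB := dual_strong lam0p heta ha0s hopt0
  (dnonneg_lin (a:= 1 / s) (b:=0) ltac:(apply: divr_ge0; lra) (lexx 0) (alpha_of_nonneg L U mstar) (alpha_of_nonneg L U mstar)).
rewrite -/al in hA hSD hB.
have P1 : Pen eta lam (dlin s 0 a0s a0s) = s * Pen eta lam0 a0s.
  by rewrite hls; apply: Pen_scale.
have P2 : Pen eta lam0 (dlin (1 / s) 0 al al) = (1 / s) * Pen eta lam al.
  have -> : lam0 = (1 / s) * lam by rewrite hls; field; rewrite gt_eqF.
  apply: Pen_scale => //; by apply: divr_gt0.
rewrite !DobjE P1 in hA; rewrite DobjE in hSD; rewrite !DobjE P2 in hB.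
rewrite !dnorm_lin ?dinner_linl ?dinner_linr in hA hB.
rewrite (dinnerC al a0s) in hA hB.
set N0 := dinner a0s a0s in hA hB; set Nl := dinner al al in hA hB hSD.
set X := dinner a0s al in hA hB.
set T0 := dinner a0s (tdv L U) in hA hB; set Tl := dinner al (tdv L U) in hA hB hSD.
set P0 := Pen eta lam0 a0s in hA hB; set Pl := Pen eta lam al in hA hB hSD.
have hB' : Tl - Pl - X / 2 + s * N0 / 4 <= - (s * N0 / 4) + s * T0 - s * P0.
  have H := ler_wpM2l (ltW s0) hB.
  have e1 : s * (- (1 / 4) * ((1 / s) ^+ 2 * Nl + 2 * (1 / s) * 0 * Nl + 0 ^+ 2 * Nl) +
    (1 / s * Tl + 0 * Tl) - 1 / s * Pl +
    1 / 4 *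
    (1 ^+ 2 * ((1 / s) ^+ 2 * Nl + 2 * (1 / s) * 0 * Nl + 0 ^+ 2 * Nl) +
     2 * 1 * -1 * (1 / s * X + 0 * X) + (-1) ^+ 2 * N0)) = Tl - Pl - X / 2 + s * N0 / 4.
    by field; rewrite gt_eqF.
  have e2 : s * (- (1 / 4) * N0 + T0 - P0) = - (s * N0 / 4) + s * T0 - s * P0 by ring.
  by rewrite e1 e2 in H.
have hball : Nl - (1 + s) * X + s * N0 <= 0.
  have e3 : - (1 / 4) * (s ^+ 2 * N0 + 2 * s * 0 * N0 + 0 ^+ 2 * N0) +
    (s * T0 + 0 * T0) - s * P0 +
    1 / 4 *
    (1 ^+ 2 * (s ^+ 2 * N0 + 2 * s * 0 * N0 + 0 ^+ 2 * N0) +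
     2 * 1 * -1 * (s * X + 0 * X) + (-1) ^+ 2 * Nl) = s * T0 - s * P0 - s * X / 2 + Nl / 4 by field.
  rewrite e3 in hA.
  have e4 : Nl - (1 + s) * X + s * N0 = 2 * ((s * T0 - s * P0 - s * X / 2 + Nl / 4)
     + (Tl - Pl - X / 2 + s * N0 / 4) - (- (1 / 4) * Nl + Tl - Pl) - (- (s * N0 / 4) + s * T0 - s * P0)) by field.
  rewrite e4; lra.
set c := (1 + s) / 2; set r := (1 - s) / 2.
have c0 : 0 <= c by rewrite /c; apply: divr_ge0; lra.
have r0 : 0 <= r by rewrite /r; apply: divr_ge0; lra.
set dl := dlin 1 (- c) al a0s.
have hNd : dinner dl dl <= r ^+ 2 * N0.
  rewrite /dl dnorm_lin (dinnerC al a0s) -/Nl -/X -/N0.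
  have e : 1 ^+ 2 * Nl + 2 * 1 * - c * X + (- c) ^+ 2 * N0 - r ^+ 2 * N0
           = Nl - (1 + s) * X + s * N0 by rewrite /c /r; field.
  rewrite -subr_ge0; rewrite -subr_ge0 in hball; lra.
have hCal : Cmul x D S al k' = Cmul x D S dl k' + c * Cmul x D S a0s k'.
  by rewrite /dl Cmul_lin; ring.
set b := rule_b x D S k.
have hb0 : 0 <= b by apply: sqrtr_ge0.
have hcb : Num.sqrt (dinner (cdv k') (cdv k')) <= b.
  rewrite /b rule_bE; apply: ler_wsqrtr; exact: (Ncdv_le hb hle).
set n0 := Num.sqrt N0.
have hCd : Cmul x D S dl k' <= r * n0 * b.
  rewrite CmulE; apply: le_trans (dCS _ _) _.
  apply: ler_pM; rewrite ?sqrtr_ge0 //.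
  apply: le_trans (ler_wsqrtr hNd) _.
  by rewrite sqrtrM ?sqr_ge0 // sqrtr_sqr ger0_norm.
set e := dsub a0 a0s.
set Ne := dinner e e.
have hNe : Num.sqrt Ne <= eps by move: hdist; rewrite /dnorm dnorm2E.
have ha0s_eq : forall z, dinner a0s z = dinner (dlin 1 (-1) a0 e) z.
  by move=> z; apply: dinner_ext => i l _ /=; ring.
have hCs : Cmul x D S a0s k' <= Cmul x D S a0 k' + eps * b.
  rewrite !CmulE ha0s_eq dinner_linl.
  have := dCS (dlin (-1) 0 e e) (cdv k'); rewrite dinner_linl dnorm_lin -/Ne.
  have -> : (-1) ^+ 2 * Ne + 2 * -1 * 0 * Ne + 0 ^+ 2 * Ne = Ne by ring.
  have := ler_pM (sqrtr_ge0 _) (sqrtr_ge0 _) hNe hcb.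
  lra.
set na := Num.sqrt (dinner a0 a0).
have hna0 : 0 <= na by apply: sqrtr_ge0.
have hn0 : n0 <= na + eps.
  have eN0 : N0 = dinner a0 a0 - 2 * dinner a0 e + Ne.
    rewrite /N0 ha0s_eq dinnerC ha0s_eq dnorm_lin -/Ne; ring.
  have := dCS (dlin (-1) 0 a0 a0) e; rewrite dinner_linl dnorm_lin -/Ne.
  have -> : (-1) ^+ 2 * dinner a0 a0 + 2 * -1 * 0 * dinner a0 a0 + 0 ^+ 2 * dinner a0 a0 = dinner a0 a0 by ring.
  rewrite -/na => hX.
  have hNa : dinner a0 a0 = na ^+ 2 by rewrite sqr_sqrtr // dinner_ge0.
  have hNe2 : Ne = Num.sqrt Ne ^+ 2 by rewrite sqr_sqrtr // dinner_ge0.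
  have hsNe : 0 <= Num.sqrt Ne by apply: sqrtr_ge0.
  have hN0le : N0 <= (na + eps) ^+ 2.
    have h1 : na * Num.sqrt Ne <= na * eps by apply: ler_wpM2l.
    have h2 : Num.sqrt Ne * Num.sqrt Ne <= eps * eps by apply: ler_pM.
    rewrite expr2 in hNa hNe2; rewrite expr2.
    lra.
  rewrite /n0; apply: le_trans (ler_wsqrtr hN0le) _.
  by rewrite sqrtr_sqr ger0_norm //; apply: addr_ge0.
have hCa : Cmul x D S a0 k' <= rule_a x D S a0 k := Cmul_le_a hb hle ha0.
have han : rule_a x D S a0 k <= na * b := @a_le_nb hb k a0 ha0.
set aa := rule_a x D S a0 k in hCa han.
move: hrule; rewrite /lambda_a /dnorm dnorm2E -/b -/na -/aa.
have den0 : 0 < 2 * lam0 + na * b - aa by lra.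
rewrite ler_pdivrMr // => hrule.
have step1 : c * Cmul x D S a0s k' <= c * (aa + eps * b) by apply: ler_wpM2l => //; lra.
have step2 : r * n0 * b <= r * (na + eps) * b by apply: ler_wpM2r => //; apply: ler_wpM2l.
have fin : r * (na + eps) * b + c * (aa + eps * b) <= lam.
  rewrite -(ler_pM2l lam0p).
  have key : 2 * (lam0 * lam - lam0 * (r * (na + eps) * b + c * (aa + eps * b)))
     = lam * (2 * lam0 + na * b - aa) - lam0 * (2 * eps * b + na * b + aa).
    by rewrite /r /c hls; field.
  lra.
rewrite hCal; lra.
Qed.

End Aux.
Theorem theorem8 (R : realType) (n K p : nat)
  (x : 'I_n -> 'I_p -> R) (D S : 'I_n -> {set 'I_n})
  (parent : 'I_p -> 'I_p) (root : 'I_p)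
  (L U eta lam lam0 eps : R)
  (alpha0star alpha0 : dvec R n) (mstar : 'I_p -> R) (k : 'I_p) :
  (forall i, #|D i| = K) -> (forall i, #|S i| = K) ->
  (0 <= U) -> (U <= L) -> (0 < eta) ->
  (* the feature tree: features are anti-monotone along the tree *)
  rooted_tree parent root ->
  (forall i k1, x i k1 <= x i (parent k1)) ->
  (* binary features *)
  (forall i k1, x i k1 = 0 \/ x i k1 = 1) ->
  (0 < lam) -> (lam <= lam0) ->
  (* alpha0star maximizes D_{lam0} over alpha >= 0 *)
  dnonneg D S alpha0star ->
  (forall al, dnonneg D S al ->
     Dobj x D S L U eta lam0 al <= Dobj x D S L U eta lam0 alpha0star) ->
  dnonneg D S alpha0 -> 0 <= eps ->
  dnorm D S (dsub alpha0 alpha0star) <= eps ->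
  (* mstar minimizes P_lam over m >= 0 *)
  (forall k1, 0 <= mstar k1) ->
  (forall m : 'I_p -> R, (forall k1, 0 <= m k1) ->
     Pobj x D S L U eta lam mstar <= Pobj x D S L U eta lam m) ->
  lambda_a x D S lam0 eps alpha0 k <= lam ->
  forall k', descendant parent k' k -> mstar k' = 0.

Proof.
move=> _ _ _ _ heta _ hpar hb hlam hll0 ha0s hopt0 ha0 heps hdist hm hoptm hrule.
exact: (@main_sec R n p x D S parent L U eta lam lam0 eps alpha0star alpha0 mstar k
          heta hpar hb hlam hll0 ha0s hopt0 ha0 heps hdist hm hoptm hrule).
Qed.
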